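(* Let $N=\ell^2$ for a positive integer $\ell$ and let $x,y\in\{0,1\}^N$. If $\sqrt{N} \ge 3\cdot\textsc{INT}(x,y)$, then the size of the global minimum cut of $G_{x,y}$ equals $2\cdot\textsc{INT}(x,y)$.
   Context: $\textsc{INT}(x,y)=\sum_{i} x_i\wedge y_i$. Index the bits of $x,y\in\{0,1\}^{\ell^2}$ as $x_{i,j},y_{i,j}$ for $1\le i,j\le \ell$. The undirected unweighted graph $G_{x,y}$ has vertex set $A\cup A'\cup B\cup B'$ with $A=\{a_1,\dots,a_\ell\}$, $A'=\{a'_1,\dots,a'_\ell\}$, $B=\{b_1,\dots,b_\ell\}$, $B'=\{b'_1,\dots,b'_\ell\}$ (disjoint), and for each $1\le i,j\le\ell$: if $x_{i,j}=y_{i,j}=1$ then the edges $(a_i,b'_j)$ and $(b_i,a'_j)$ are present; otherwise the edges $(a_i,a'_j)$ and $(b_i,b'_j)$ are present. No other edges exist. The global minimum cut size is $\min_{\varnothing\subset S\subset V}|E(S,V\setminus S)|$. *)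

(* Defs.v *)
From mathcomp Require Import all_boot.
Set Implicit Arguments. Unset Strict Implicit. Unset Printing Implicit Defensive.

(* Vertices of G_{x,y}: (k, i) with k : 'I_4 encoding the part
   0 = A, 1 = A', 2 = B, 3 = B', and i : 'I_l the index (0-based). *)
Definition vert (l : nat) := ('I_4 * 'I_l)%type.

(* Bit strings in {0,1}^{l^2}, indexed by pairs (i,j). *)
Definition bits (l : nat) := {ffun 'I_l * 'I_l -> bool}.

Definition INT (l : nat) (x y : bits l) : nat :=
  #|[set p : 'I_l * 'I_l | x p && y p]|.

Definition pA : 'I_4 := @Ordinal 4 0 isT.
Definition pA' : 'I_4 := @Ordinal 4 1 isT.
Definition pB : 'I_4 := @Ordinal 4 2 isT.
Definition pB' : 'I_4 := @Ordinal 4 3 isT.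

Definition gen (l : nat) (x y : bits l) (u v : vert l) : bool :=
  let: (ku, i) := u in let: (kv, j) := v in
  if x (i, j) && y (i, j) then
    ((ku == pA) && (kv == pB')) || ((ku == pB) && (kv == pA'))
  else
    ((ku == pA) && (kv == pA')) || ((ku == pB) && (kv == pB')).

Definition adj (l : nat) (x y : bits l) : rel (vert l) :=
  fun u v => gen x y u v || gen x y v u.

(* number of edges crossing the cut (S, V \ S): every undirected edge
   {u,v} with u in S, v notin S is counted exactly once as the ordered
   pair (u,v). *)
Definition cut_size (l : nat) (x y : bits l) (S : {set vert l}) : nat :=
  #|[set e : vert l * vert l | [&& e.1 \in S, e.2 \notin S & adj x y e.1 e.2]]|.

Definition proper_cut (l : nat) (S : {set vert l}) : bool :=
  (S != set0) && (S != [set: vert l]).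

Definition is_global_min_cut (l : nat) (x y : bits l) (m : nat) : Prop :=
  (exists2 S : {set vert l}, proper_cut S & cut_size x y S = m) /\
  (forall S : {set vert l}, proper_cut S -> m <= cut_size x y S).

(* Main.v *)
Require Import Defs.
From mathcomp Require Import all_boot.
From mathcomp Require Import zify.
Set Implicit Arguments. Unset Strict Implicit.

Definition ee l (x y : bits l) (b : bool) (p : 'I_l * 'I_l) : vert l * vert l :=
  if b then ((pB, p.1), ((if x p && y p then pA' else pB'), p.2))
  else ((pA, p.1), ((if x p && y p then pB' else pA'), p.2)).

Definition orient l (S : {set vert l}) (e : vert l * vert l) :=
  if e.1 \in S then e else (e.2, e.1).

Lemma ee_adj l (x y : bits l) b p : adj x y (ee x y b p).1 (ee x y b p).2.
Proof.
case: p => i j; rewrite /adj /gen /ee; case: b => /=; by case: (x (i,j) && y (i,j)).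
Qed.

Lemma ee_inj l (x y : bits l) : injective (fun bp => ee x y bp.1 bp.2).
Proof.
move=> [b [i j]] [b' [i' j']] /= E.
have E1 := congr1 (fun e => val e.1.1) E.
have E2 := congr1 (fun e => e.1.2) E.
have E3 := congr1 (fun e => e.2.2) E.
clear E; move: E1 E2 E3; by case: b; case: b' => //=; move=> _ -> ->.
Qed.

Lemma ee_odd l (x y : bits l) b p : odd (val (ee x y b p).2.1) /\ ~~ odd (val (ee x y b p).1.1).
Proof. by case: b; rewrite /ee /=; case: (x p && y p). Qed.

Lemma h_inj l (x y : bits l) S : injective (fun bp => orient S (ee x y bp.1 bp.2)).
Proof.
move=> bp bq /=; rewrite /orient.
case: ifP => _; case: ifP => _ E.
- exact: (@ee_inj l x y bp bq E).
- have /= E' := congr1 (fun e => odd (val e.1.1)) E.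
  have [_ H1] := ee_odd x y bp.1 bp.2. have [H2 _] := ee_odd x y bq.1 bq.2.
  by move: E'; rewrite (negbTE H1) H2.
- have /= E' := congr1 (fun e => odd (val e.1.1)) E.
  have [H1 _] := ee_odd x y bp.1 bp.2. have [_ H2] := ee_odd x y bq.1 bq.2.
  by move: E'; rewrite (negbTE H2) H1.
- apply: (@ee_inj l x y bp bq); have := congr1 (fun e => (e.2, e.1)) E; by case: (ee _ _ _ _); case: (ee _ _ _ _).
Qed.

Definition cr l (S : {set vert l}) (e : vert l * vert l) := (e.1 \in S) != (e.2 \in S).

Lemma cut_ge l (x y : bits l) S :
  #|[set bp | cr S (ee x y bp.1 bp.2)]| <= cut_size x y S.
Proof.
rewrite -(card_imset _ (@h_inj l x y S)); apply: subset_leq_card.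
apply/subsetP => e /imsetP [bp]; rewrite inE /cr /orient => Hcr ->.
rewrite inE; have Ha := @ee_adj l x y bp.1 bp.2.
case: ifP Hcr => /= H; rewrite H => Hcr.
  by rewrite Hcr Ha.
by rewrite -(negbK (_ \in S)) Hcr /adj orbC.
Qed.

Lemma row_lemma l (f g : 'I_l -> bool) i0 j0 :
  f i0 != g j0 -> l <= #|[set p : 'I_l * 'I_l | f p.1 != g p.2]|.
Proof.
move=> H0.
case: (boolP [forall i, f i == f i0]) => [/forallP Hc | /forallPn [i1 Hi1]].
  have inj : injective (fun t : 'I_l => (t, j0)) by move=> a b [].
  rewrite -[l in l <= _]card_ord -(card_imset _ inj).
  apply: subset_leq_card; apply/subsetP => _ /imsetP [t _ ->].
  by rewrite inE /= (eqP (Hc t)).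
pose h := fun t : 'I_l => ((if f i0 != g t then i0 else i1), t).
have inj : injective h by move=> a b /(congr1 snd).
rewrite -[l in l <= _]card_ord -(card_imset _ inj).
apply: subset_leq_card; apply/subsetP => _ /imsetP [t _ ->].
rewrite inE /h /=; case: ifP => // /negbFE /eqP <-.
exact: Hi1.
Qed.

Lemma split_card (T : finType) (P Q : pred T) :
  #|[set p | P p]| <= #|[set p | P p && ~~ Q p]| + #|[set p | Q p]|.
Proof.
apply: leq_trans (leq_card_setU _ _); apply: subset_leq_card.
apply/subsetP => p; rewrite !inE; by case: (P p); case: (Q p).
Qed.

Lemma ord4 (k : 'I_4) : k = pA \/ k = pA' \/ k = pB \/ k = pB'.
Proof.
case: k => [[|[|[|[|m]]]] Hk]; [left|right;left|right;right;left|right;right;right|by []];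
  exact: val_inj.
Qed.

Lemma upper l (x y : bits l) :
  cut_size x y [set v : vert l | (v.1 == pA) || (v.1 == pA')] <= 2 * INT x y.
Proof.
set S0 := [set v : vert l | _].
apply: leq_trans (_ : #|(fun bp => orient S0 (ee x y bp.1 bp.2)) @: setX [set: bool] [set p | x p && y p]| <= _); last first.
  by apply: leq_trans (leq_imset_card _ _) _; rewrite cardsX cardsT card_bool.
apply: subset_leq_card; apply/subsetP => [[[ku i] [kv j]]]; rewrite inE /= => /and3P [].
rewrite /S0 !inE /adj /gen /=.
have [->|[->|[->|->]]] := ord4 ku; have [->|[->|[->|->]]] := ord4 kv;
  rewrite -?val_eqE /=;
  case Hij: (x (i,j) && y (i,j)); case Hji: (x (j,i) && y (j,i)) => //= _ _ _;
  apply/imsetP; first [ exists (false,(i,j)); [by rewrite !inE Hij | by rewrite /orient /ee /= Hij !inE]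
                      | exists (true,(j,i)); [by rewrite !inE Hji | by rewrite /orient /ee /= Hji !inE]].
Qed.

Lemma lower l (x y : bits l) (S : {set vert l}) :
  0 < l -> 3 * INT x y <= l -> proper_cut S -> 2 * INT x y <= cut_size x y S.
Proof.
move=> l0 Hl /andP [Sn0 SnT].
apply: leq_trans (cut_ge x y S).
set I := [set p | x p && y p].
have HI : INT x y = #|I| by [].
rewrite HI in Hl *.
pose o := Ordinal l0.
case: (boolP [exists i, exists j, ((pA,i) \in S) != ((pA',j) \in S)]) =>
   [/existsP [i0 /existsP [j0 H0]] | HA].
  have Hr := @row_lemma l (fun i => (pA,i) \in S) (fun j => (pA',j) \in S) _ _ H0.
  have Hs := split_card (fun p : 'I_l * 'I_l => ((pA,p.1) \in S) != ((pA',p.2) \in S))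
                        (fun p => x p && y p).
  apply: leq_trans (_ : #|setX [set false] [set p : 'I_l * 'I_l | (((pA,p.1) \in S) != ((pA',p.2) \in S)) && ~~ (x p && y p)]| <= _).
    rewrite cardsX cards1 mul1n. move: Hr Hs; rewrite -/I. move=> H1 H2; have H3 := leq_trans H1 H2; rewrite -(leq_add2r #|I|); apply: leq_trans _ H3; apply: leq_trans _ Hl; lia.
  apply: subset_leq_card; apply/subsetP => [[b p]]; rewrite !inE /= => /andP [/eqP -> /andP [HD Hni]].
  by rewrite /cr /ee /= (negbTE Hni).
case: (boolP [exists i, exists j, ((pB,i) \in S) != ((pB',j) \in S)]) =>
   [/existsP [i0 /existsP [j0 H0]] | HB].
  have Hr := @row_lemma l (fun i => (pB,i) \in S) (fun j => (pB',j) \in S) _ _ H0.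
  have Hs := split_card (fun p : 'I_l * 'I_l => ((pB,p.1) \in S) != ((pB',p.2) \in S))
                        (fun p => x p && y p).
  apply: leq_trans (_ : #|setX [set true] [set p : 'I_l * 'I_l | (((pB,p.1) \in S) != ((pB',p.2) \in S)) && ~~ (x p && y p)]| <= _).
    rewrite cardsX cards1 mul1n. move: Hr Hs; rewrite -/I. move=> H1 H2; have H3 := leq_trans H1 H2; rewrite -(leq_add2r #|I|); apply: leq_trans _ H3; apply: leq_trans _ Hl; lia.
  apply: subset_leq_card; apply/subsetP => [[b p]]; rewrite !inE /= => /andP [/eqP -> /andP [HD Hni]].
  by rewrite /cr /ee /= (negbTE Hni).
have EA : forall i j, ((pA,i) \in S) = ((pA',j) \in S).
  move=> i j; move/existsPn: HA => /(_ i) /existsPn /(_ j) /negPn /eqP; done.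
have EB : forall i j, ((pB,i) \in S) = ((pB',j) \in S).
  move=> i j; move/existsPn: HB => /(_ i) /existsPn /(_ j) /negPn /eqP; done.
case: (boolP (((pA,o) \in S) == ((pB,o) \in S))) => Hab.
  have Hall : forall v, (v \in S) = ((pA,o) \in S).
    move=> [k i]; have [->|[->|[->|->]]] := ord4 k.
    - by rewrite (EA i o) -(EA o o).
    - by rewrite -(EA o i).
    - by rewrite (eqP Hab) (EB i o) -(EB o o).
    - by rewrite (eqP Hab) -(EB o i).
  case: ((pA,o) \in S) Hall => Hall.
    by move/negP: SnT; case; apply/eqP/setP => v; rewrite inE Hall.
  by move/negP: Sn0; case; apply/eqP/setP => v; rewrite inE Hall.
apply: leq_trans (_ : #|setX [set: bool] I| <= _).
  by rewrite cardsX cardsT card_bool.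
apply: subset_leq_card; apply/subsetP => [[b [i j]]]; rewrite !inE /= => Hint.
rewrite /cr /ee; case: b => /=; rewrite Hint.
  by rewrite (EB i o) -(EA o j) -(EB o o) eq_sym.
by rewrite (EA i o) -(EA o o) -(EB o j).
Qed.

Theorem lemma5p5 (l : nat) (x y : bits l) :
  0 < l -> 3 * INT x y <= l ->
  is_global_min_cut x y (2 * INT x y).
Proof.
move=> l0 Hl.
have HP : proper_cut [set v : vert l | (v.1 == pA) || (v.1 == pA')].
  apply/andP; split; apply/eqP => /setP E.
    by have := E (pA, Ordinal l0); rewrite !inE eqxx.
  by have := E (pB, Ordinal l0); rewrite !inE.
split; last by move=> S; exact: lower.
exists [set v : vert l | (v.1 == pA) || (v.1 == pA')] => //.
by apply/eqP; rewrite eqn_leq upper lower.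
Qed.
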